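(* Let $n\in\mathbb N$, $r\ge2$, and $\underline m=(m_1,\dots,m_n)\in\mathbb N^n$ with $\gcd(m_i,r)=1$ for all $i$. In the graph $L_{2n-1}\times_{\underline m}\mathbb Z_r$: (i) for $i,j$ with $i+1\le j\le n$, the number of $1$-step $0$-simple paths from $(v_i,0)$ to $(v_j,0)$ is $r$; (ii) for $i,j$ with $i+2\le j\le n$, the number of $2$-step $0$-simple paths from $(v_i,0)$ to $(v_j,0)$ is $\frac{r(r-1)}{2}(j-i-1)$; (iii) for each $i$ with $i+3\le n$, the number of $3$-step $0$-simple paths from $(v_i,0)$ to $(v_{i+3},0)$ is congruent to $-m_{i+2}^{-1}m_{i+1}\frac{r(r-1)(r-2)}{3}$ modulo $r$. Consequently, the number of $0$-simple paths from $(v_i,0)$ to $(v_{i+2},0)$ is $\frac{r(r+1)}{2}$, and the number of $0$-simple paths from $(v_i,0)$ to $(v_{i+3},0)$ is congruent to $-m_{i+2}^{-1}m_{i+1}\frac{r(r-1)(r-2)}{3}$ modulo $r$.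
   Context: $L_{2n-1}\times_{\underline m}\mathbb Z_r$ is the directed graph with vertices $(v_i,k)$ and edges $(e_{i,j},k)$ for $1\le i\le j\le n$, $k\in\mathbb Z_r$, where $s(e_{i,j},k)=(v_i,k-m_i)$ and $r(e_{i,j},k)=(v_j,k)$. A path $\alpha=(e_{i_1,j_1},k_1)\cdots(e_{i_\ell,j_\ell},k_\ell)$ is $0$-simple if $k_1=m_{i_1}$, $k_a\ne0$ for $a\ne\ell$, and $k_\ell=0$ (so it starts at $(v_{i_1},0)$ and ends at $(v_{j_\ell},0)$). A $0$-simple path $\alpha$ is $k$-step if there are integers $t_1<t_2<\dots<t_{k+1}$ with $t_1=i_1$, $t_{k+1}=j_\ell$, such that for each $2\le q\le k$ some edge of $\alpha$ has range in $\{v_{t_q}\}\times\mathbb Z_r$, and all ranges of edges of $\alpha$ lie in $\bigcup_{q=1}^{k+1}\{v_{t_q}\}\times\mathbb Z_r$. For an integer $a$ coprime to $r$, $a^{-1}$ denotes any integer inverse of $a$ modulo $r$. *)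

(* Defs.v *)
From mathcomp Require Import all_boot all_order all_algebra.
Set Implicit Arguments. Unset Strict Implicit. Unset Printing Implicit Defensive.
Import GRing.Theory.
Local Open Scope ring_scope.

(* The graph L_{2n-1} x_m Z_r.  Vertices (v_i,k) with 1 <= i <= n, k : 'Z_r.
   An edge (e_{i,j},k) is encoded as the triple (i, j, k). *)
Definition edge (r : nat) : Type := (nat * nat * 'Z_r)%type.

Definition e_src (r : nat) (e : edge r) : nat := e.1.1.
Definition e_rng (r : nat) (e : edge r) : nat := e.1.2.
Definition e_lvl (r : nat) (e : edge r) : 'Z_r := e.2.

Definition is_edge (n : nat) (r : nat) (e : edge r) : bool :=
  (1 <= e_src e)%N && (e_src e <= e_rng e)%N && (e_rng e <= n)%N.

Definition src_vertex (r : nat) (m : nat -> nat) (e : edge r) : nat * 'Z_r :=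
  (e_src e, e_lvl e - (m (e_src e))%:R).
Definition rng_vertex (r : nat) (e : edge r) : nat * 'Z_r := (e_rng e, e_lvl e).

Definition adj (r : nat) (m : nat -> nat) (e1 e2 : edge r) : bool :=
  rng_vertex e1 == src_vertex m e2.

Definition is_path (n r : nat) (m : nat -> nat) (p : seq (edge r)) : bool :=
  (0 < size p)%N && all (@is_edge n r) p && sorted (@adj r m) p.

Definition edge0 (r : nat) : edge r := (0%N, 0%N, 0).

Definition zero_simple (n r : nat) (m : nat -> nat) (p : seq (edge r)) : Prop :=
  is_path n m p /\
  e_lvl (nth (edge0 r) p 0) = (m (e_src (nth (edge0 r) p 0)))%:R /\
  (forall a, (a < (size p).-1)%N -> e_lvl (nth (edge0 r) p a) != 0) /\
  e_lvl (nth (edge0 r) p (size p).-1) = 0.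

Definition p_start (r : nat) (p : seq (edge r)) : nat := e_src (nth (edge0 r) p 0).
Definition p_end (r : nat) (p : seq (edge r)) : nat :=
  e_rng (nth (edge0 r) p (size p).-1).

(* k-step: there are integers t_1 < ... < t_{k+1} (here t = [:: t_1; ...; t_{k+1}],
   0-based) with t_1 = i_1, t_{k+1} = j_l, each t_q (2 <= q <= k) is the range
   index of some edge of p, and all range indices of edges of p are among the t_q. *)
Definition kstep (r : nat) (k : nat) (p : seq (edge r)) : Prop :=
  exists t : seq nat,
    size t = k.+1 /\ sorted ltn t /\
    nth 0%N t 0 = p_start p /\ nth 0%N t k = p_end p /\
    (forall q, (1 <= q < k)%N -> exists2 e, e \in p & e_rng e = nth 0%N t q) /\
    (forall e, e \in p -> e_rng e \in t).

Definition has_card (T : eqType) (P : T -> Prop) (c : nat) : Prop :=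
  exists s : seq T, uniq s /\ (forall x, P x <-> x \in s) /\ size s = c.

Definition zs_from_to (n r : nat) (m : nat -> nat) (i j : nat) (p : seq (edge r)) : Prop :=
  zero_simple n m p /\ p_start p = i /\ p_end p = j.

(* Main.v *)
Require Import Defs.
From mathcomp Require Import all_boot all_order all_algebra.
From mathcomp Require Import ring zify.
Import GRing.Theory.
Set Implicit Arguments. Unset Strict Implicit.

Section Zst.
Variable r : nat.
Hypothesis r_gt1 : (1 < r)%N.
Local Open Scope ring_scope.

Definition zst (L : 'Z_r) (k : nat) : nat :=
  let y := nat_of_ord (- L / (k%:R : 'Z_r)) in if y == 0%N then r else y.

Lemma ord_ltr (x : 'Z_r) : (nat_of_ord x < r)%N.
Proof. have := ltn_ord x; rewrite [X in (_ < X)%N -> _]Zp_cast //. Qed.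

Lemma natZp_eq (a b : nat) : (a < r)%N -> (b < r)%N ->
  ((a%:R : 'Z_r) = b%:R) -> a = b.
Proof.
move=> ha hb /(congr1 (@nat_of_ord _)); rewrite !val_Zp_nat // !modn_small //.
Qed.

Lemma unitM (k : nat) : coprime k r -> (k%:R : 'Z_r) \is a GRing.unit.
Proof. by move=> c; rewrite unitZpE // coprime_sym. Qed.

Lemma zst_gt0 L k : (0 < zst L k)%N.
Proof. rewrite /zst; case: eqP => // /eqP; rewrite lt0n //; lia. Qed.

Lemma zst_le L k : (zst L k <= r)%N.
Proof. rewrite /zst; case: eqP => // _; exact: ltnW (ord_ltr _). Qed.

Lemma zst_zero L k : coprime k r -> L + (zst L k)%:R * k%:R = 0.
Proof.
move=> c; have u := unitM c; rewrite /zst.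
case: eqP => [h|_].
  have : - L / k%:R = 0.
    by apply: ord_inj; rewrite h.
  move/(congr1 (fun x => x * k%:R)); rewrite divrK // mul0r => /eqP.
  rewrite oppr_eq0 => /eqP ->; rewrite pchar_Zp // mul0r addr0 //.
rewrite natr_Zp divrK //; ring.
Qed.

Lemma zst_nz L k e : coprime k r -> (0 < e)%N -> (e < zst L k)%N ->
  L + e%:R * k%:R != 0.
Proof.
move=> c e0 ez; have u := unitM c; apply/eqP => h.
have he : (e%:R : 'Z_r) = - L / k%:R.
  apply: (mulIr u); rewrite divrK //; apply/eqP; rewrite -subr_eq0 opprK addrC h //.
have er : (e < r)%N by apply: leq_trans ez (zst_le _ _).
move: ez; rewrite /zst -he val_Zp_nat // modn_small //.
case: eqP => [h0|_]; [move: e0; rewrite h0 | rewrite ltnn] => //.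
Qed.

Lemma zst0 k : zst 0 k = r.
Proof. by rewrite /zst oppr0 mul0r. Qed.

Lemma zst_val L k : coprime k r -> L != 0 -> zst L k = nat_of_ord (- L / (k%:R : 'Z_r)).
Proof.
move=> c Lnz; have u := unitM c; rewrite /zst; case: eqP => // h.
have : - L / k%:R = 0 by apply: ord_inj; rewrite h.
move/(congr1 (fun x => x * k%:R)); rewrite divrK // mul0r => /eqP.
by rewrite oppr_eq0 (negbTE Lnz).
Qed.

End Zst.


Section Paths.
Variables (n r : nat) (m : nat -> nat).
Local Open Scope ring_scope.

Fixpoint G (v : nat) (L : 'Z_r) (ws : seq nat) : bool :=
  match ws with
  | [::] => false
  | w :: ws' => if ws' is [::] then L + (m v)%:R == 0
                else (L + (m v)%:R != 0) && G w (L + (m v)%:R) ws'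
  end.

Fixpoint mkp (v : nat) (L : 'Z_r) (ws : seq nat) : seq (edge r) :=
  match ws with
  | [::] => [::]
  | w :: ws' => (v, w, L + (m v)%:R) :: mkp w (L + (m v)%:R) ws'
  end.

Lemma map_rng_mkp v L ws : map (@e_rng r) (mkp v L ws) = ws.
Proof. by elim: ws v L => //= w ws IH v L; rewrite IH. Qed.

Lemma size_mkp v L ws : size (mkp v L ws) = size ws.
Proof. by rewrite -(size_map (@e_rng r)) map_rng_mkp. Qed.

Lemma mkp_inj v L : injective (mkp v L).
Proof. by move=> w1 w2 h; rewrite -(map_rng_mkp v L w1) h map_rng_mkp. Qed.

Lemma path_adj_mkp ws w L e : rng_vertex e = (w, L) -> path (@adj r m) e (mkp w L ws).
Proof.
elim: ws w L e => //= w' ws IH w L e he; rewrite (IH _ _) // andbT.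
by rewrite /adj he /src_vertex /= addrK.
Qed.

Lemma sorted_mkp v L ws : sorted (@adj r m) (mkp v L ws).
Proof. by case: ws => //= w ws; apply: path_adj_mkp. Qed.

Lemma all_edge_mkp v L ws : (1 <= v)%N ->
  all (@is_edge n r) (mkp v L ws) = path leq v ws && all (fun w => (w <= n)%N) ws.
Proof.
elim: ws v L => //= w ws IH v L v1.
rewrite /is_edge /e_src /e_rng /= v1 /=.
case vw: (v <= w)%N => //=.
rewrite IH; last by apply: leq_trans vw.
by rewrite andbCA andbA.
Qed.

Lemma G_lvl v L ws : G v L ws <->
  [/\ (0 < size ws)%N,
      (forall a, (a < (size ws).-1)%N -> e_lvl (nth (edge0 r) (mkp v L ws) a) != 0) &
      e_lvl (nth (edge0 r) (mkp v L ws) (size ws).-1) = 0].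
Proof.
elim: ws v L => [|w ws IH] v L; first by split => //= -[].
case: ws IH => [|w' ws] IH.
  rewrite /=; split; first by move/eqP => h; split => // a.
  by case => _ _ /eqP.
have -> : G v L [:: w, w' & ws] = (L + (m v)%:R != 0) && G w (L + (m v)%:R) (w' :: ws) by [].
split.
  case/andP => h0 /IH [_ h1 h2]; split => //.
  by case=> [|a] //= ha; apply: h1.
case=> _ h1 h2; rewrite (h1 0%N) //=; apply/IH; split => // a ha.
exact: (h1 a.+1).
Qed.

Lemma recon p : forall e L, sorted (@adj r m) (e :: p) ->
  e_lvl e = L + (m (e_src e))%:R ->
  e :: p = mkp (e_src e) L (map (@e_rng r) (e :: p)).
Proof.
elim: p => [|e2 p IH] e L /=.
  by move=> _; case: e => [[i j] k] /= ->.
case/andP => ha hs h.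
move: ha; rewrite /adj /rng_vertex /src_vertex => /eqP [h1 h2].
have h2' : e_lvl e2 = e_lvl e + (m (e_src e2))%:R by rewrite h2 subrK.
have /= E2 := IH e2 (e_lvl e) hs h2'.
rewrite -h h1 -E2 -h1.
by case: e {h h1 h2 h2' E2} => [[]].
Qed.

Definition Base (i : nat) (ws : seq nat) : bool :=
  [&& G i 0 ws, path leq i ws & all (fun w => (w <= n)%N) ws].

Lemma G_nil v L : G v L [::] = false. Proof. by []. Qed.

Lemma G_size v L ws : G v L ws -> (0 < size ws)%N.
Proof. by case: ws. Qed.

Lemma zs_iff (i : nat) (p : seq (edge r)) : (1 <= i)%N ->
  (zero_simple n m p /\ p_start p = i) <-> exists2 ws, p = mkp i 0 ws & Base i ws.
Proof.
move=> i1; split.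
  case=> [[/andP [/andP [sp ep] so] [h0 [h1 h2]]] hst].
  case: p sp ep so h0 h1 h2 hst => //= e p _ ep so h0 h1 h2 hst.
  have {}hst : e_src e = i := hst.
  have := @recon p e 0 so; rewrite add0r h0 hst => /(_ erefl) E.
  exists (map (@e_rng r) (e :: p)); first exact: E.
  have ep' : all (@is_edge n r) (mkp i 0 (map (@e_rng r) (e :: p))) by rewrite -E /= ep.
  rewrite /Base -(@all_edge_mkp i 0) // ep' andbT.
  apply/G_lvl; rewrite size_map -E; split => //.
case=> ws -> /and3P [g pa al].
have s0 := G_size g.
case/G_lvl: g => _ h1 h2.
split; last by case: ws s0 {h1 h2 pa al} => //.
split.
  by rewrite /is_path size_mkp s0 all_edge_mkp // pa al sorted_mkp.
rewrite size_mkp; split; last by split.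
by case: ws s0 {h1 h2 pa al} => //= *; rewrite add0r.
Qed.

End Paths.


Section Enum.
Variables (r : nat) (m : nat -> nat).
Hypothesis r_gt1 : (1 < r)%N.
Local Open Scope ring_scope.

Local Notation M v := ((m v)%:R : 'Z_r).

Fixpoint En (L : 'Z_r) (v0 : nat) (vs : seq nat) {struct vs} : seq (seq nat) :=
  match vs with
  | [::] => [:: nseq (zst L (m v0)) v0]
  | v1 :: vs' =>
    flatten [seq [seq nseq a v0 ++ v1 :: w | w <-
       if L + (a.+1)%:R * M v0 == 0 then (if vs' is [::] then [:: [::]] else [::])
       else En (L + (a.+1)%:R * M v0) v1 vs'] | a <- iota 0 (zst L (m v0))]
  end.

Definition Valid (L : 'Z_r) (v0 : nat) (vs ws : seq nat) : bool :=
  [&& G m v0 L ws, path leq v0 ws, all (fun w => w \in v0 :: vs) ws &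
      all (fun v => v \in ws) vs].

Lemma shiftL (L x : 'Z_r) e : L + x + e%:R * x = L + e.+1%:R * x.
Proof. by rewrite -natr1; ring. Qed.

Lemma G_nseq v L a w ws :
  G m v L (nseq a v ++ w :: ws) <->
  (forall e, (0 < e <= a)%N -> L + e%:R * M v != 0) /\ G m v (L + a%:R * M v) (w :: ws).
Proof.
elim: a L => [|a IH] L.
  rewrite /= mul0r addr0; split; [by move=> h; split => // e; lia | by case].
have -> : G m v L (nseq a.+1 v ++ w :: ws) =
          (L + M v != 0) && G m v (L + M v) (nseq a v ++ w :: ws).
  by case: a {IH}.
split.
  case/andP => h0 /IH [h1 h2]; split; last by rewrite -shiftL.
  move=> [|e] //= he; case: e he => [|e] he; first by rewrite mul1r.
  by rewrite -shiftL; apply: h1; lia.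
case=> h1 h2; have := h1 1%N; rewrite mul1r => -> //=; apply/IH; split; last by rewrite shiftL.
move=> e he; rewrite shiftL; apply: h1; lia.
Qed.

Lemma shiftR (L x : 'Z_r) e : L + e%:R * x + x = L + e.+1%:R * x.
Proof. by rewrite -natr1; ring. Qed.

Lemma nseqS_r (a v : nat) : nseq a.+1 v = nseq a v ++ [:: v].
Proof. by elim: a => //= a <-. Qed.

Lemma G_final v L a : G m v L (nseq a v) <->
  [/\ (0 < a)%N, (forall e, (0 < e < a)%N -> L + e%:R * M v != 0) & L + a%:R * M v = 0].
Proof.
case: a => [|a]; first by split => // -[].
rewrite nseqS_r; split.
  by move/G_nseq => [h1 /eqP h2]; split => //; rewrite -shiftR.
case=> _ h1 h2; apply/G_nseq; split; first by move=> e he; apply: h1; lia.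
by rewrite /= shiftR h2.
Qed.

Lemma path_nseq (v a : nat) : path leq v (nseq a v).
Proof. by elim: a => //= a ->; rewrite leqnn. Qed.

Lemma mem_nc (x a v0 v1 : nat) w :
  (x \in nseq a v0 ++ v1 :: w) = ((0 < a)%N && (x == v0)) || (x == v1) || (x \in w).
Proof. by rewrite mem_cat mem_nseq in_cons orbA. Qed.

Lemma nseq_cat_inj (v0 v1 : nat) a b w w' : v1 != v0 ->
  nseq a v0 ++ v1 :: w = nseq b v0 ++ v1 :: w' -> a = b /\ w = w'.
Proof.
move=> ne; elim: a b => [|a IH] [|b] /=.
- by case.
- by case=> h; rewrite h eqxx in ne.
- by case=> h; rewrite h eqxx in ne.
- by case=> /IH [-> ->].
Qed.

Lemma sorted3 (v0 v1 : nat) vs : sorted ltn [:: v0, v1 & vs] ->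
  [/\ (v0 < v1)%N, all (fun x => (v1 < x)%N) vs & sorted ltn (v1 :: vs)].
Proof.
case/andP => h p1; split => //.
exact: (order_path_min ltn_trans p1).
Qed.

Lemma decomp (v0 v1 : nat) vs ws : sorted ltn [:: v0, v1 & vs] -> path leq v0 ws ->
  all (fun w => w \in [:: v0, v1 & vs]) ws -> v1 \in ws ->
  exists a w, ws = nseq a v0 ++ v1 :: w.
Proof.
case/sorted3 => lt01 avs _.
elim: ws => [|x ws IH] //= /andP [h0 hp] /andP [hx ha] hv1.
case: (x =P v0) => [ex | nx].
  subst x; have hv : v1 \in ws.
    by move: hv1; rewrite in_cons => /orP [/eqP e|] //; move: lt01; rewrite e ltnn.
  by case: (IH hp ha hv) => a [w ->]; exists a.+1, w.
exists 0%N, ws; congr (_ :: _).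
move: hx; rewrite !in_cons => /orP [/eqP //|/orP [/eqP //| xv]].
have xg : (v1 < x)%N by apply: (allP avs).
move: hv1; rewrite in_cons => /orP [/eqP e|hw]; first by rewrite e ltnn in xg.
have := allP (order_path_min leq_trans hp) _ hw => /= h; lia.
Qed.

Lemma zst_unique L k a : coprime k r -> (0 < a)%N ->
  (forall e, (0 < e < a)%N -> L + e%:R * (k%:R : 'Z_r) != 0) ->
  L + a%:R * k%:R = 0 -> a = zst L k.
Proof.
move=> c a0 h1 h2.
have z0 := zst_gt0 r_gt1 L k.
case: (ltngtP a (zst L k)) => // h.
  by move: (zst_nz r_gt1 (L:=L) c a0 h); rewrite h2 eqxx.
have : (0 < zst L k < a)%N by rewrite z0 h.
by move/h1; rewrite zst_zero // eqxx.
Qed.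

Lemma last_nseq' (v a : nat) : last v (nseq a v) = v.
Proof. by elim: a. Qed.

Lemma path_nc (v0 v1 a : nat) w :
  path leq v0 (nseq a v0 ++ v1 :: w) = (v0 <= v1)%N && path leq v1 w.
Proof. by rewrite cat_path path_nseq last_nseq'. Qed.

Lemma CH vs : forall v0 L ws, sorted ltn (v0 :: vs) ->
  all (fun v => coprime (m v) r) (v0 :: vs) ->
  (ws \in En L v0 vs) = Valid L v0 vs ws.
Proof.
elim: vs => [|v1 vs IH] v0 L ws so cop.
  have c0 : coprime (m v0) r by case/andP: cop.
  rewrite /= mem_seq1 /Valid andbT; apply/eqP/and3P.
    move=> ->; split.
    - apply/G_final; split; first exact: zst_gt0.
        by move=> e /andP [e0 ez]; apply: zst_nz.
      exact: zst_zero.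
    - exact: path_nseq.
    - by rewrite all_nseq mem_head orbT.
  case=> g pa al.
  have : all (pred1 v0) ws by apply/allP => x /(allP al); rewrite mem_seq1.
  move/all_pred1P => E; rewrite E in g *; congr nseq.
  by case/G_final: g => h0 h1 h2; apply: zst_unique.
case/sorted3: (so) => lt01 avs so1.
have c0 : coprime (m v0) r by case/andP: cop.
have cop1 : all (fun v => coprime (m v) r) (v1 :: vs) by case/andP: cop.
apply/idP/idP.
  case/flattenP => s /mapP [a]; rewrite mem_iota add0n => /andP [_ az] -> /mapP [w hw ->].
  have hnz : forall e, (0 < e <= a)%N -> L + e%:R * M v0 != 0.
    by move=> e /andP [e0 ea]; apply: zst_nz => //; lia.
  case: eqP hw => [L0 | Lnz] hw.
    case: vs {IH so avs so1 cop cop1} hw => //; rewrite mem_seq1 => /eqP ->.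
    apply/and4P; split.
    - by apply/G_nseq; split => //=; rewrite shiftR L0 eqxx.
    - by rewrite path_nc ltnW.
    - apply/allP => x; rewrite mem_nc => /orP [/orP [/andP [_ /eqP ->]| /eqP ->] | //].
        by rewrite mem_head.
      by rewrite !in_cons eqxx orbT.
    - by rewrite /= mem_nc eqxx orbT.
  rewrite IH // in hw; case/and4P: hw => g pa al am.
  case: w g pa al am => [//|w1 w'] g pa al am.
  apply/and4P; split.
  - apply/G_nseq; split => //=; rewrite shiftR; apply/andP; split => //; exact/eqP.
  - by rewrite path_nc ltnW.
  - apply/allP => x; rewrite mem_nc => /orP [/orP [/andP [_ /eqP ->]| /eqP ->] | xw].
    + by rewrite mem_head.
    + by rewrite !in_cons eqxx orbT.
    + by rewrite in_cons (allP al x xw) orbT.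
  - rewrite /= mem_nc eqxx orbT /=.
    by apply/allP => v hv; rewrite mem_nc (allP am v hv) !orbT.
case/and4P => g pa al am.
have v1w : v1 \in ws by case/andP: am.
case: (decomp so pa al v1w) => a [w E]; subst ws.
move/G_nseq: g => [hnz g2].
have az : (a < zst L (m v0))%N.
  rewrite ltnNge; apply/negP => za.
  have H : (0 < zst L (m v0) <= a)%N by rewrite zst_gt0.
  by move: (hnz _ H); rewrite zst_zero // eqxx.
apply/flattenP; eexists.
  apply: (@map_f _ _ (fun a => [seq nseq a v0 ++ v1 :: w0 | w0 <-
       if L + (a.+1)%:R * M v0 == 0 then (if vs is [::] then [:: [::]] else [::])
       else En (L + (a.+1)%:R * M v0) v1 vs]) _ a).
  by rewrite mem_iota; lia.
apply: map_f.
move: g2; rewrite /= shiftR.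
case: w pa al am {v1w} => [|w1 w'] pa al am.
  move/eqP => ->; rewrite eqxx.
  case: vs {IH} so avs so1 al am cop cop1 => // v2 vs' so avs so1 al am _ _.
  have : v2 \in nseq a v0 ++ [:: v1] by case/and3P: am.
  have : (v1 < v2)%N by case/andP: avs.
  rewrite mem_nc orbF => h /orP [/andP [_ /eqP e]|/eqP e]; lia.
case/andP => Lnz g1; rewrite (negbTE Lnz) IH //.
move: pa; rewrite path_nc => /andP [_ pa].
apply/and4P; split => //.
  apply/allP => x hx.
  have : (v1 <= x)%N by have := allP (order_path_min leq_trans pa) x hx.
  have := allP al x; rewrite mem_nc hx !orbT => /(_ isT).
  by rewrite in_cons => /orP [/eqP -> | //]; lia.
apply/allP => v hv.
have := allP avs v hv; have := allP am v; rewrite in_cons hv orbT => /(_ isT).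
rewrite mem_nc => /orP [/orP [/andP [_ /eqP e]|/eqP e]| //]; lia.
Qed.

Lemma uniq_flat (A T : eqType) (s : seq A) (F : A -> seq T) : uniq s ->
  (forall a, uniq (F a)) -> (forall a b x, x \in F a -> x \in F b -> a = b) ->
  uniq (flatten (map F s)).
Proof.
move=> us uF dF; elim: s us => //= a s IH /andP [ns us].
rewrite cat_uniq uF IH // andbT /=; apply/hasP => -[x /flattenP [y /mapP [b bs ->] xb] xa].
by move: ns; rewrite (dF _ _ _ xa xb) bs.
Qed.

Lemma uniq_En vs : forall v0 L, sorted ltn (v0 :: vs) -> uniq (En L v0 vs).
Proof.
elim: vs => [|v1 vs IH] v0 L so //.
case/sorted3: so => lt01 _ so1.
have ne : v1 != v0 by rewrite (gtn_eqF lt01).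
apply: uniq_flat; first exact: iota_uniq.
  move=> a; rewrite map_inj_uniq; last by move=> x y /(nseq_cat_inj ne) [_ ->].
  by case: ifP => _; [case: vs {IH so1} | exact: IH].
by move=> a b x /mapP [w _ ->] /mapP [w' _] /(nseq_cat_inj ne) [-> _].
Qed.

Lemma size_En_cons L v0 v1 vs : size (En L v0 (v1 :: vs)) =
  (\sum_(a < zst L (m v0)) size (if (L + (a.+1)%:R * M v0 == 0)%R then
      (if vs is [::] then [:: [::]] else [::]) else En (L + (a.+1)%:R * M v0)%R v1 vs))%N.
Proof.
rewrite /= size_flatten /shape -map_comp sumnE big_map.
have -> : iota 0 (zst L (m v0)) = index_iota 0 (zst L (m v0)) by rewrite /index_iota subn0.
rewrite big_mkord.
by apply: eq_bigr => a _; rewrite /= size_map.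
Qed.

Lemma size_En1 L v0 v1 : size (En L v0 [:: v1]) = zst L (m v0).
Proof.
rewrite size_En_cons (eq_bigr (fun _ => 1%N)) ?sum1_card ?card_ord //.
by move=> a _; case: ifP.
Qed.

Lemma size_En2 L v0 v1 v2 : coprime (m v1) r ->
  size (En L v0 [:: v1; v2]) =
  (\sum_(a < zst L (m v0)) nat_of_ord (- (L + (a.+1)%:R * M v0) / M v1)%R)%N.
Proof.
move=> c; rewrite size_En_cons; apply: eq_bigr => a _.
case: eqP => [-> | /eqP nz]; first by rewrite oppr0 mul0r.
by rewrite size_En1 (zst_val r_gt1).
Qed.

End Enum.


Section Sums.
Variable p : nat.
Local Notation r := p.+2.
Local Open Scope ring_scope.

Lemma sum_shift (f : 'Z_r -> nat) (c : 'Z_r) : c \is a GRing.unit ->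
  (\sum_(a < r) f ((a.+1)%:R * c)%R = \sum_(x : 'Z_r) f x)%N.
Proof.
move=> cu.
pose h (a : nat) := f (a%:R * c)%R.
have E : (\sum_(a < r) h a.+1 = \sum_(a < r) h a)%N.
  have E1 : (\sum_(a < r.+1) h a = h 0%N + \sum_(a < r) h a.+1)%N by rewrite big_ord_recl.
  have E2 : (\sum_(a < r.+1) h a = \sum_(a < r) h a + h r)%N by rewrite big_ord_recr.
  have : (h 0%N + \sum_(a < r) h a.+1 = \sum_(a < r) h a + h r)%N.
    by rewrite -E2 E1.
  have hr : h r = h 0%N by rewrite /h pchar_Zp.
  by rewrite hr addnC => /eqP; rewrite eqn_add2r => /eqP.
rewrite -/h E /h.
rewrite [RHS](reindex_inj (mulIr cu)) /=.
by apply: eq_bigr => a _; rewrite natr_Zp.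
Qed.

Lemma sum_negdiv (g : nat -> nat) (d : 'Z_r) : d \is a GRing.unit ->
  (\sum_(x : 'Z_r) g (nat_of_ord (- x / d)%R) = \sum_(i < r) g i)%N.
Proof.
move=> du.
have inj : injective (fun x : 'Z_r => - x / d).
  have du' : d^-1 \is a GRing.unit by rewrite unitrV.
  by move=> x y /(mulIr du') /oppr_inj.
by rewrite [RHS](reindex_inj inj).
Qed.

End Sums.

Lemma sum_revC2 (z : nat) : (\sum_(b < z) (z - b.+1) = 'C(z, 2))%N.
Proof.
rewrite -bin2_sum big_rev_mkord subn0; apply: eq_bigr => //.
Qed.

Lemma sum_C2 (n : nat) : (\sum_(i < n) 'C(i, 2) = 'C(n, 3))%N.
Proof.
elim: n => [|n IH]; first by rewrite big_ord0.
by rewrite big_ord_recr /= IH [in RHS]binS addnC.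
Qed.

Lemma sum_id (n : nat) : (\sum_(i < n) i = 'C(n, 2))%N.
Proof. by rewrite -bin2_sum big_mkord. Qed.


Section Counts.
Variables (p : nat) (m : nat -> nat).
Local Notation r := p.+2.
Local Open Scope ring_scope.
Local Notation M v := ((m v)%:R : 'Z_r).
Let r_gt1 : (1 < r)%N. Proof. by []. Qed.

Lemma count1 i j : size (@En r m 0 i [:: j]) = r.
Proof. by rewrite size_En1 zst0. Qed.

Lemma count2 i x j : coprime (m i) r -> coprime (m x) r ->
  size (@En r m 0 i [:: x; j]) = 'C(r, 2).
Proof.
move=> ci cx.
rewrite (size_En2 r_gt1) // zst0.
under eq_bigr do rewrite add0r.
rewrite (sum_shift (fun y => nat_of_ord (- y / M x)) (unitM r_gt1 ci)).
by rewrite (sum_negdiv id (unitM r_gt1 cx)) sum_id.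
Qed.

Lemma term3 (L : 'Z_r) i1 i2 i3 : coprime (m i1) r -> coprime (m i2) r ->
  (size (if L == 0 then [::] else @En r m L i1 [:: i2; i3]))%:R =
  ('C(nat_of_ord (- L / M i1), 2))%:R * (M i1 / M i2).
Proof.
move=> c1 c2.
case: eqP => [-> | /eqP nz]; first by rewrite oppr0 mul0r /=.
rewrite (size_En2 r_gt1) // -(zst_val r_gt1) // natr_sum.
set z := zst L (m i1).
have hL : L = - (z%:R * M i1) by apply/eqP; rewrite -subr_eq0 opprK zst_zero.
rewrite -sum_revC2 natr_sum mulr_suml; apply: eq_bigr => b _.
rewrite natr_Zp natrB; last by apply: ltn_ord.
rewrite {1}hL /=; rewrite !mulrA; ring.
Qed.

Lemma count3 i i1 i2 i3 : coprime (m i) r -> coprime (m i1) r -> coprime (m i2) r ->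
  ((size (@En r m 0 i [:: i1; i2; i3]))%:R : 'Z_r) = ('C(r, 3))%:R * (M i1 / M i2).
Proof.
move=> ci c1 c2.
rewrite size_En_cons zst0 natr_sum.
under eq_bigr => a _ do rewrite /= add0r term3 //.
rewrite -mulr_suml -natr_sum.
rewrite (sum_shift (fun y => 'C(nat_of_ord (- y / M i1), 2)) (unitM r_gt1 ci)).
by rewrite (sum_negdiv (fun i => 'C(i, 2)) (unitM r_gt1 c1)) sum_C2.
Qed.

End Counts.


Section HC.
Variable T : eqType.

Lemma HC_list (s : seq T) : uniq s -> has_card (fun x => x \in s) (size s).
Proof. by move=> u; exists s. Qed.

Lemma HC_ext (P Q : T -> Prop) c : (forall x, P x <-> Q x) -> has_card P c -> has_card Q c.
Proof. by move=> h [s [u [hs sz]]]; exists s; split => //; split => // x; rewrite -h. Qed.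

Lemma HC_or (P Q : T -> Prop) a b : has_card P a -> has_card Q b ->
  (forall x, P x -> Q x -> False) -> has_card (fun x => P x \/ Q x) (a + b).
Proof.
move=> [s [us [hs ss]]] [t [ut [ht st]]] dj; exists (s ++ t); split; [|split].
- rewrite cat_uniq us ut andbT /=; apply/hasP => -[x xt xs].
  by apply: (dj x); [apply/hs | apply/ht].
- by move=> x; rewrite mem_cat hs ht; split => /orP.
- by rewrite size_cat ss st.
Qed.

Lemma HC_big (xs : seq nat) (P : nat -> T -> Prop) c : uniq xs ->
  (forall x, x \in xs -> has_card (P x) c) ->
  (forall x y w, x \in xs -> y \in xs -> P x w -> P y w -> x = y) ->
  has_card (fun w => exists2 x, x \in xs & P x w) (c * size xs).
Proof.
elim: xs => [|x xs IH] /=.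
  by move=> _ _ _; exists [::]; split => //; split; [move=> w; split => // -[] | rewrite muln0].
case/andP => nx ux hc dj.
rewrite mulnS; apply: (HC_ext (P := fun w => P x w \/ exists2 y, y \in xs & P y w)).
  move=> w; split; first by case=> [h|[y hy h]]; [exists x; rewrite ?mem_head | exists y; rewrite // in_cons hy orbT].
  by case=> y; rewrite in_cons => /orP [/eqP -> h|hy h]; [left | right; exists y].
apply: HC_or; first by apply: hc; rewrite mem_head.
  apply: IH => //; first by move=> y hy; apply: hc; rewrite in_cons hy orbT.
  by move=> y z w hy hz; apply: dj; rewrite in_cons ?hy ?hz orbT.
move=> w h [y hy h']; move: nx.
have hy' : y \in x :: xs by rewrite in_cons hy orbT.
by rewrite (dj _ _ _ (mem_head _ _) hy' h h') hy.
Qed.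

Lemma HC_map (U : eqType) (f : U -> T) (P : T -> Prop) (Q : U -> Prop) c :
  injective f -> (forall y, P y <-> exists2 x, Q x & y = f x) -> has_card Q c -> has_card P c.
Proof.
move=> fi h [s [us [hs ss]]]; exists (map f s); split; [|split].
- by rewrite map_inj_uniq.
- move=> y; rewrite h; split.
    by case=> x /hs xs ->; apply: map_f.
  by case/mapP => x /hs xs ->; exists x.
- by rewrite size_map.
Qed.
End HC.

Section PathWs.
Variables (n r : nat) (m : nat -> nat).

Definition KW (k i : nat) (ws : seq nat) : Prop :=
  exists t : seq nat, size t = k.+1 /\ sorted ltn t /\ nth 0 t 0 = i /\
    nth 0 t k = last i ws /\ (forall q, (1 <= q < k)%N -> nth 0 t q \in ws) /\
    (forall w, w \in ws -> w \in t).

Lemma pstart_mkp i L ws : ws != [::] -> p_start (@mkp r m i L ws) = i.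
Proof. by case: ws. Qed.

Lemma pend_mkp i L ws : ws != [::] -> p_end (@mkp r m i L ws) = last i ws.
Proof.
move=> ne; rewrite /p_end size_mkp.
have -> : e_rng (nth (edge0 r) (mkp m i L ws) (size ws).-1) =
          nth 0%N (map (@e_rng r) (mkp m i L ws)) (size ws).-1.
  by rewrite (nth_map (edge0 r)) // size_mkp; case: ws ne.
by rewrite map_rng_mkp nth_last; case: ws ne.
Qed.

Lemma mem_rng i L ws v : (exists2 e, e \in @mkp r m i L ws & e_rng e = v) <-> v \in ws.
Proof.
rewrite -{2}(map_rng_mkp m i L ws); split.
  by case=> e he <-; apply: map_f.
by case/mapP => e he ->; exists e.
Qed.

Lemma kstep_mkp k i ws : ws != [::] -> kstep k (@mkp r m i 0%R ws) <-> KW k i ws.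
Proof.
move=> ne; rewrite /kstep /KW pend_mkp // pstart_mkp //; split.
  case=> t [h1 [h2 [h3 [h4 [h5 h6]]]]]; exists t; do 5!split => //.
    by move=> q /h5 /mem_rng.
  move=> w; rewrite -(@map_rng_mkp r m i 0%R ws) => /mapP [e he ->]; exact: h6.
case=> t [h1 [h2 [h3 [h4 [h5 h6]]]]]; exists t; do 5!split => //.
  by move=> q /h5 /(@mem_rng i 0%R ws).
move=> e he; apply: h6; rewrite -(@map_rng_mkp r m i 0%R ws); exact: map_f.
Qed.

Lemma Base_ne i ws : Base n r m i ws -> ws != [::].
Proof. by case/and3P => /G_size; case: ws. Qed.

Lemma PL0 i j (p : seq (edge r)) : (1 <= i)%N ->
  zs_from_to n m i j p <-> exists2 ws, (Base n r m i ws /\ last i ws = j) & p = mkp m i 0%R ws.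
Proof.
move=> i1; rewrite /zs_from_to; split.
  case=> zs [hs he].
  case: (proj1 (zs_iff n m p i1) (conj zs hs)) => ws E b.
  by exists ws => //; split => //; rewrite -(@pend_mkp i 0%R) ?(Base_ne b) // -E.
case=> ws [b hl] ->.
have [zs hs] : zero_simple n m (@mkp r m i 0%R ws) /\ p_start (@mkp r m i 0%R ws) = i.
  by apply/(zs_iff n m (@mkp r m i 0%R ws) i1); exists ws.
by split => //; split => //; rewrite pend_mkp // (Base_ne b).
Qed.

Lemma PL k i j (p : seq (edge r)) : (1 <= i)%N ->
  (zs_from_to n m i j p /\ kstep k p) <->
  exists2 ws, (Base n r m i ws /\ last i ws = j /\ KW k i ws) & p = mkp m i 0%R ws.
Proof.
move=> i1; split.
  case=> /(PL0 j p i1) [ws [b hl] E] ks; exists ws => //; split => //; split => //.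
  by rewrite -kstep_mkp ?(Base_ne b) // -E.
case=> ws [b [hl kw]] E; split; first by apply/(PL0 j p i1); exists ws.
by rewrite E; apply/kstep_mkp => //; rewrite (Base_ne b).
Qed.

End PathWs.


Lemma Hlast (i : nat) ws : path leq i ws -> forall w, w \in i :: ws -> (w <= last i ws)%N.
Proof.
elim: ws i => [|x ws IH] i /=; first by move=> _ w; rewrite mem_seq1 => /eqP ->.
case/andP => ix px w; rewrite in_cons => /orP [/eqP ->|hw].
  by apply: leq_trans ix (IH _ px _ (mem_head _ _)).
exact: IH.
Qed.

Lemma Hge (i : nat) ws : path leq i ws -> forall w, w \in ws -> (i <= w)%N.
Proof. by move=> pa w hw; have := allP (order_path_min leq_trans pa) w hw. Qed.

Lemma Hmemlast (i : nat) ws : ws != [::] -> last i ws \in ws.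
Proof. by case: ws => //= x ws _; apply: mem_last. Qed.

Lemma KW_intro k (i : nat) ws t : size t = k.+1 -> sorted ltn t -> nth 0 t 0 = i ->
  nth 0 t k = last i ws -> (forall q, (1 <= q < k)%N -> nth 0 t q \in ws) ->
  (forall w, w \in ws -> w \in t) -> KW k i ws.
Proof. by move=> *; exists t. Qed.

Section W.
Variables (n p : nat) (m : nat -> nat).
Local Notation r := p.+2.
Hypothesis cop : forall i, (1 <= i <= n)%N -> coprime (m i) r.

Local Notation Valid0 := (@Valid r m 0%R).
Local Notation Base0 := (Base n r m).

Lemma Valid_unpack i vs ws : Valid0 i vs ws ->
  [/\ @G r m i 0%R ws, path leq i ws, (forall w, w \in ws -> w \in i :: vs) &
      (forall v, v \in vs -> v \in ws)].
Proof. by case/and4P => g pa /allP al /allP am. Qed.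

Lemma Valid_pack i vs ws : Base0 i ws -> (forall w, w \in ws -> w \in i :: vs) ->
  (forall v, v \in vs -> v \in ws) -> Valid0 i vs ws.
Proof. by case/and3P => g pa _ al am; apply/and4P; split => //; apply/allP. Qed.

Lemma VB i vs ws : sorted ltn (i :: vs) -> vs != [::] -> (last i vs <= n)%N ->
  Valid0 i vs ws -> Base0 i ws /\ last i ws = last i vs.
Proof.
move=> so ne ln /Valid_unpack [g pa al am].
have pv : path leq i vs by apply: sub_path so => x y /ltnW.
have wne : ws != [::] by move: (G_size g); case: (ws).
split.
  apply/and3P; split => //; apply/allP => w /al hw.
  by apply: leq_trans ln; apply: Hlast.
apply/eqP; rewrite eqn_leq; apply/andP; split.
  by apply: Hlast => //; apply: al; apply: Hmemlast.
by apply: Hlast => //; rewrite in_cons am ?orbT // Hmemlast.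
Qed.

Lemma Base_bounds i ws : Base0 i ws -> forall w, w \in ws -> (i <= w <= last i ws)%N.
Proof.
case/and3P => g pa _ w hw; rewrite (Hge pa hw) /=.
by apply: Hlast; rewrite // in_cons hw orbT.
Qed.

Lemma W1 i j ws : (i < j <= n)%N ->
  (Base0 i ws /\ last i ws = j /\ KW 1 i ws) <-> Valid0 i [:: j] ws.
Proof.
move=> /andP [ij jn]; split.
  case=> b [hl [t [h1 [h2 [h3 [h4 [h5 h6]]]]]]].
  case: t h1 h2 h3 h4 h5 h6 => [|t0 [|t1 [|t2 t]]] //= _ h2 h3 h4 _ h6.
  rewrite hl in h4; subst t0 t1.
  apply: Valid_pack => // v; rewrite mem_seq1 => /eqP ->.
  by rewrite -hl Hmemlast // (Base_ne b).
move=> V; have [b hl] := VB (i := i) (vs := [:: j]) (ltac:(by rewrite /= ij)) isT jn V.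
split => //; split => //; apply: (@KW_intro _ _ _ [:: i; j]) => //=.
- by rewrite ij.
- by move=> q; lia.
- by case/Valid_unpack: V.
Qed.

Lemma W2 i j ws : (i + 2 <= j <= n)%N ->
  (Base0 i ws /\ last i ws = j /\ KW 2 i ws) <->
  exists2 x, x \in iota i.+1 (j - i - 1) & Valid0 i [:: x; j] ws.
Proof.
move=> /andP [ij jn]; split.
  case=> b [hl [t [h1 [h2 [h3 [h4 [h5 h6]]]]]]].
  case: t h1 h2 h3 h4 h5 h6 => [|t0 [|t1 [|t2 [|t3 t]]]] //= _ h2 h3 h4 h5 h6.
  rewrite hl in h4; subst t0 t2.
  move: h2 => /and3P [lt1 lt2 _].
  exists t1; first by rewrite mem_iota; lia.
  apply: Valid_pack => // v; rewrite !inE => /orP [/eqP ->|/eqP ->].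
    by apply: (h5 1%N).
  by rewrite -hl Hmemlast // (Base_ne b).
case=> x; rewrite mem_iota => hx V.
have [b hl] := VB (i := i) (vs := [:: x; j]) (ltac:(rewrite /=; apply/and3P; split => //; lia)) isT jn V.
split => //; split => //; apply: (@KW_intro _ _ _ [:: i; x; j]) => //=.
- by apply/and3P; split => //; lia.
- move=> q hq; have -> : q = 1%N by lia.
  by case/Valid_unpack: V => _ _ _; apply; rewrite mem_head.
- by case/Valid_unpack: V.
Qed.

Lemma W3 i ws : (i + 3 <= n)%N ->
  (Base0 i ws /\ last i ws = i + 3 /\ KW 3 i ws) <-> Valid0 i [:: i + 1; i + 2; i + 3] ws.
Proof.
move=> hn; split.
  case=> b [hl [t [h1 [h2 [h3 [h4 [h5 h6]]]]]]].
  case: t h1 h2 h3 h4 h5 h6 => [|t0 [|t1 [|t2 [|t3 [|t4 t]]]]] //= _ h2 h3 h4 h5 h6.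
  rewrite hl in h4; subst t0 t3.
  move: h2 => /and4P [lt1 lt2 lt3 _].
  have e1 : t1 = i + 1 by lia.
  have e2 : t2 = i + 2 by lia.
  subst t1 t2.
  apply: Valid_pack => // v; rewrite !inE => /orP [/eqP ->|/orP [/eqP ->|/eqP ->]].
  - by apply: (h5 1%N).
  - by apply: (h5 2%N).
  - by rewrite -hl Hmemlast // (Base_ne b).
move=> V.
have [b hl] := VB (i := i) (vs := [:: i + 1; i + 2; i + 3])
  (ltac:(rewrite /=; apply/and4P; split => //; lia)) isT hn V.
split => //; split => //; apply: (@KW_intro _ _ _ [:: i; i + 1; i + 2; i + 3]) => //=.
- by apply/and4P; split => //; lia.
- case/Valid_unpack: V => _ _ _ am.
  move=> q hq; have : q = 1%N \/ q = 2%N by lia.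
  by case=> ->; apply: am; rewrite !inE eqxx ?orbT.
- by case/Valid_unpack: V.
Qed.

Lemma W4 i ws : (i + 2 <= n)%N ->
  (Base0 i ws /\ last i ws = i + 2) <->
  Valid0 i [:: i + 2] ws \/ Valid0 i [:: i + 1; i + 2] ws.
Proof.
move=> hn; split.
  case=> b hl; have bd := Base_bounds b; rewrite hl in bd.
  have jm : i + 2 \in ws by rewrite -hl Hmemlast // (Base_ne b).
  case: (boolP (i + 1 \in ws)) => h1; [right | left]; apply: Valid_pack => //.
  - by move=> w hw; have := bd w hw; rewrite !inE; lia.
  - by move=> v; rewrite !inE => /orP [/eqP ->|/eqP ->].
  - move=> w hw; have := bd w hw; have : w != i + 1 by apply: contraNneq h1 => <-.
    by rewrite !inE; lia.
  - by move=> v; rewrite !inE => /eqP ->.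
case=> V.
  have [b hl] := VB (i := i) (vs := [:: i + 2]) (ltac:(rewrite /=; lia)) isT hn V.
  by split.
have [b hl] := VB (i := i) (vs := [:: i + 1; i + 2])
  (ltac:(rewrite /=; apply/and3P; split => //; lia)) isT hn V.
by split.
Qed.

Lemma W5 i ws : (i + 3 <= n)%N ->
  (Base0 i ws /\ last i ws = i + 3) <->
  Valid0 i [:: i + 3] ws \/ (Valid0 i [:: i + 1; i + 3] ws \/
  (Valid0 i [:: i + 2; i + 3] ws \/ Valid0 i [:: i + 1; i + 2; i + 3] ws)).
Proof.
move=> hn; split.
  case=> b hl; have bd := Base_bounds b; rewrite hl in bd.
  have jm : i + 3 \in ws by rewrite -hl Hmemlast // (Base_ne b).
  case: (boolP (i + 1 \in ws)) => h1; case: (boolP (i + 2 \in ws)) => h2.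
  - right; right; right; apply: Valid_pack => //.
      by move=> w hw; have := bd w hw; rewrite !inE; lia.
    by move=> v; rewrite !inE => /orP [/eqP ->|/orP [/eqP ->|/eqP ->]].
  - right; left; apply: Valid_pack => //.
      move=> w hw; have := bd w hw; have : w != i + 2 by apply: contraNneq h2 => <-.
      by rewrite !inE; lia.
    by move=> v; rewrite !inE => /orP [/eqP ->|/eqP ->].
  - right; right; left; apply: Valid_pack => //.
      move=> w hw; have := bd w hw; have : w != i + 1 by apply: contraNneq h1 => <-.
      by rewrite !inE; lia.
    by move=> v; rewrite !inE => /orP [/eqP ->|/eqP ->].
  - left; apply: Valid_pack => //.
      move=> w hw; have := bd w hw; have : w != i + 1 by apply: contraNneq h1 => <-.
      have : w != i + 2 by apply: contraNneq h2 => <-.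
      by rewrite !inE; lia.
    by move=> v; rewrite !inE => /eqP ->.
case=> [V|[V|[V|V]]].
- have [b hl] := VB (i := i) (vs := [:: i + 3]) (ltac:(rewrite /=; lia)) isT hn V.
  by split.
- have [b hl] := VB (i := i) (vs := [:: i + 1; i + 3])
    (ltac:(rewrite /=; apply/and3P; split => //; lia)) isT hn V.
  by split.
- have [b hl] := VB (i := i) (vs := [:: i + 2; i + 3])
    (ltac:(rewrite /=; apply/and3P; split => //; lia)) isT hn V.
  by split.
- have [b hl] := VB (i := i) (vs := [:: i + 1; i + 2; i + 3])
    (ltac:(rewrite /=; apply/and4P; split => //; lia)) isT hn V.
  by split.
Qed.

End W.


Lemma intr_Zp (p : nat) (a : int) :
  (a%:~R : 'Z_p.+2)%R = ((absz (a %% p.+2)%Z)%:R)%R.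
Proof.
have h : ((a %% p.+2) = (absz (a %% p.+2)%Z)%:Z)%Z.
  have := modz_ge0 a (isT : ((p.+2)%:Z != 0)%R); lia.
rewrite {1}(divz_eq a p.+2) intrD intrM h.
have -> : (((p.+2)%:Z)%:~R : 'Z_p.+2)%R = (p.+2)%:R%R by [].
by rewrite pchar_Zp // GRing.mulr0 GRing.add0r.
Qed.

Lemma modZp (p : nat) (a b : int) :
  ((a%:~R : 'Z_p.+2) = b%:~R)%R <-> (a = b %[mod p.+2])%Z.
Proof.
rewrite !intr_Zp; split; last by move=> ->.
have ha := modz_ge0 a (isT : ((p.+2)%:Z != 0)%R).
have hb := modz_ge0 b (isT : ((p.+2)%:Z != 0)%R).
have la := ltz_pmod a (isT : (0 < (p.+2)%:Z)%R).
have lb := ltz_pmod b (isT : (0 < (p.+2)%:Z)%R).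
move/(natZp_eq (isT : (1 < p.+2)%N)).
have ha' : (absz (a %% p.+2)%Z < p.+2)%N by lia.
have hb' : (absz (b %% p.+2)%Z < p.+2)%N by lia.
move=> /(_ ha' hb') e; lia.
Qed.

Lemma C2m n : ('C(n, 2) * 2 = n * (n - 1))%N.
Proof. elim: n => // n IH; rewrite binS bin1 mulnDl IH; case: n {IH} => // n; nia. Qed.

Lemma C3m n : ('C(n, 3) * 6 = n * (n - 1) * (n - 2))%N.
Proof.
elim: n => // n IH; rewrite binS mulnDl IH.
have := C2m n; case: n {IH} => [|[|n]] //; nia.
Qed.

Unset Implicit Arguments.

Theorem lemma7p5 (n r : nat) (m : nat -> nat) :
  (2 <= r)%N ->
  (forall i, (1 <= i <= n)%N -> coprime (m i) r) ->
  (* (i) *)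
  (forall i j, (1 <= i)%N -> (i + 1 <= j <= n)%N ->
     has_card (fun p : seq (edge r) => zs_from_to n m i j p /\ kstep 1 p) r) /\
  (* (ii) *)
  (forall i j, (1 <= i)%N -> (i + 2 <= j <= n)%N ->
     has_card (fun p : seq (edge r) => zs_from_to n m i j p /\ kstep 2 p)
              ((r * (r - 1)) %/ 2 * (j - i - 1))) /\
  (* (iii) *)
  (forall i, (1 <= i)%N -> (i + 3 <= n)%N ->
     exists c, has_card (fun p : seq (edge r) => zs_from_to n m i (i + 3) p /\ kstep 3 p) c /\
       forall u : int, (u * (m (i + 2))%:Z = 1 %[mod r%:Z])%Z ->
         (c%:Z = - u * (m (i + 1))%:Z * ((r * (r - 1) * (r - 2)) %/ 3)%N%:Z
            %[mod r%:Z])%Z) /\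
  (* consequences *)
  (forall i, (1 <= i)%N -> (i + 2 <= n)%N ->
     has_card (fun p : seq (edge r) => zs_from_to n m i (i + 2) p) ((r * (r + 1)) %/ 2)) /\
  (forall i, (1 <= i)%N -> (i + 3 <= n)%N ->
     exists c, has_card (fun p : seq (edge r) => zs_from_to n m i (i + 3) p) c /\
       forall u : int, (u * (m (i + 2))%:Z = 1 %[mod r%:Z])%Z ->
         (c%:Z = - u * (m (i + 1))%:Z * ((r * (r - 1) * (r - 2)) %/ 3)%N%:Z
            %[mod r%:Z])%Z).
Proof.
case: r => [|[|p]] // _ cop.
have r_gt1 : (1 < p.+2)%N by [].
have HCE : forall v0 vs, sorted ltn (v0 :: vs) -> all (fun v => (0 < v <= n)%N) (v0 :: vs) ->
    has_card (fun ws => Valid (r := p.+2) m 0%R v0 vs ws) (size (En (r := p.+2) m 0%R v0 vs)).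
  move=> v0 vs so al.
  apply: (HC_ext (P := fun ws => ws \in En (r := p.+2) m 0%R v0 vs)).
    by move=> ws; rewrite CH //; apply: sub_all al => v; apply: cop.
  by apply: HC_list; apply: uniq_En.
have TR : forall i (Pp : seq (edge p.+2) -> Prop) (Qw : seq nat -> Prop) c,
    (forall q, Pp q <-> exists2 ws, Qw ws & q = mkp m i 0%R ws) -> has_card Qw c -> has_card Pp c.
  by move=> i Pp Qw c h; apply: HC_map h; apply: mkp_inj.
have MOD3 : forall i, (1 <= i)%N -> (i + 3 <= n)%N -> forall u : int,
    (u * (m (i + 2))%:Z = 1 %[mod (p.+2)%:Z])%Z ->
    ((size (En (r := p.+2) m 0%R i [:: i + 1; i + 2; i + 3]))%:Z =
       - u * (m (i + 1))%:Z * ((p.+2 * (p.+2 - 1) * (p.+2 - 2)) %/ 3)%N%:Z %[mod (p.+2)%:Z])%Z.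
  move=> i i1 hn u hu.
  apply/modZp.
  have c0 : coprime (m i) p.+2 by apply: cop; lia.
  have c1 : coprime (m (i + 1)) p.+2 by apply: cop; lia.
  have c2 : coprime (m (i + 2)) p.+2 by apply: cop; lia.
  have e : forall k : nat, ((k%:Z)%:~R : 'Z_p.+2)%R = (k%:R)%R by [].
  have hu' := proj2 (modZp p _ _) hu; rewrite intrM !e in hu'.
  have hU : (u%:~R : 'Z_p.+2)%R = (((m (i + 2))%:R)^-1)%R.
    apply: (mulIr (unitM r_gt1 c2)); rewrite GRing.mulVr ?hu' //; exact: unitM.
  rewrite e (count3 _ c0 c1 c2) !intrM intrN !e hU.
  set K := ((p.+2 * (p.+2 - 1) * (p.+2 - 2)) %/ 3)%N.
  have hK : K = ('C(p.+2, 3) * 2)%N.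
    by rewrite /K -C3m (_ : 6 = 2 * 3)%N // mulnA mulnK.
  have dv : (p.+2 %| 'C(p.+2, 3) + K)%N.
    apply/dvdnP; exists 'C(p.+1, 2); rewrite hK.
    have := C3m p.+2; have := C2m p.+1; nia.
  have hCK : (('C(p.+2, 3))%:R : 'Z_p.+2)%R = (- K%:R)%R.
    apply/eqP; rewrite -GRing.addr_eq0 -GRing.natrD; apply/eqP.
    by case/dvdnP: dv => q ->; rewrite GRing.natrM pchar_Zp // GRing.mulr0.
  rewrite hCK; ring.
split.
  move=> i j i1 hij.
  have hij' : (i < j <= n)%N by lia.
  have HC := HCE i [:: j] ltac:(rewrite /= andbT; lia) ltac:(rewrite /=; lia).
  rewrite count1 in HC.
  apply: (TR i _ (fun ws => Valid (r := p.+2) m 0%R i [:: j] ws)) HC.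
  move=> q; apply: (iff_trans (PL n m 1 j q i1)).
  by split => -[ws H E]; exists ws => //; move: H; rewrite -/(is_true _); [move/(W1 p m ws hij') | move=> H; apply/(W1 p m ws hij')].
split.
  move=> i j i1 hij.
  have -> : ((p.+2 * (p.+2 - 1)) %/ 2 * (j - i - 1))%N = ('C(p.+2, 2) * size (iota i.+1 (j - i - 1)))%N.
    by rewrite size_iota bin2 -divn2 subn1.
  apply: (TR i _ (fun ws => exists2 x, x \in iota i.+1 (j - i - 1) & Valid (r := p.+2) m 0%R i [:: x; j] ws)).
    move=> q; apply: (iff_trans (PL n m 2 j q i1)).
    by split => -[ws H E]; exists ws => //; move: H; [move/(W2 p m ws hij) | move=> H; apply/(W2 p m ws hij)].
  apply: HC_big; first exact: iota_uniq.
    move=> x; rewrite mem_iota => hx.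
    have c0 : coprime (m i) p.+2 by apply: cop; lia.
    have cx : coprime (m x) p.+2 by apply: cop; lia.
    rewrite -(count2 j c0 cx).
    by apply: HCE; rewrite /=; [apply/and3P; split => //; lia | lia].
  move=> x y w; rewrite !mem_iota => hx hy /Valid_unpack [_ _ a1 a2] /Valid_unpack [_ _ b1 b2].
  by have := a1 y (b2 y (mem_head _ _)); rewrite !inE; lia.
split.
  move=> i i1 hn; exists (size (En (r := p.+2) m 0%R i [:: i + 1; i + 2; i + 3])); split.
    apply: (TR i _ (fun ws => Valid (r := p.+2) m 0%R i [:: i + 1; i + 2; i + 3] ws)).
      move=> q; apply: (iff_trans (PL n m 3 (i + 3) q i1)).
      by split => -[ws H E]; exists ws => //; move: H; rewrite -/(is_true _); [move/(W3 p m ws hn) | move=> H; apply/(W3 p m ws hn)].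
    apply: HCE; rewrite /=; [apply/and4P; split => //; lia | apply/and5P; split => //; lia].
  exact: MOD3.
split.
  move=> i i1 hn.
  have c0 : coprime (m i) p.+2 by apply: cop; lia.
  have c1 : coprime (m (i + 1)) p.+2 by apply: cop; lia.
  have -> : ((p.+2 * (p.+2 + 1)) %/ 2)%N = (p.+2 + 'C(p.+2, 2))%N.
    rewrite bin2 -divn2 (_ : p.+2 * (p.+2 + 1) = p.+2 * p.+1 + p.+2 * 2)%N; last by nia.
    by rewrite divnDr ?dvdn_mull // mulnK // addnC.
  apply: (TR i _ (fun ws => Valid (r := p.+2) m 0%R i [:: i + 2] ws \/
                           Valid (r := p.+2) m 0%R i [:: i + 1; i + 2] ws)).
    move=> q; apply: (iff_trans (PL0 n m (i + 2) q i1)).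
    by split => -[ws H E]; exists ws => //; move: H; [move/(W4 p m ws hn) | move=> H; apply/(W4 p m ws hn)].
  apply: HC_or.
  - have HC := HCE i [:: i + 2] ltac:(rewrite /= andbT; lia) ltac:(rewrite /=; lia).
    by rewrite count1 in HC.
  - rewrite -(count2 (i + 2) c0 c1).
    by apply: HCE; rewrite /=; [apply/and3P; split => //; lia | lia].
  - move=> w /Valid_unpack [_ _ a1 _] /Valid_unpack [_ _ _ b2].
    by have := a1 _ (b2 _ (mem_head _ _)); rewrite !inE; lia.
move=> i i1 hn.
have c0 : coprime (m i) p.+2 by apply: cop; lia.
have c1 : coprime (m (i + 1)) p.+2 by apply: cop; lia.
have c2 : coprime (m (i + 2)) p.+2 by apply: cop; lia.
exists (p.+2 + ('C(p.+2, 2) + ('C(p.+2, 2) +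
   size (En (r := p.+2) m 0%R i [:: i + 1; i + 2; i + 3]))))%N; split.
  apply: (TR i _ (fun ws => Valid (r := p.+2) m 0%R i [:: i + 3] ws \/
     (Valid (r := p.+2) m 0%R i [:: i + 1; i + 3] ws \/
     (Valid (r := p.+2) m 0%R i [:: i + 2; i + 3] ws \/
      Valid (r := p.+2) m 0%R i [:: i + 1; i + 2; i + 3] ws)))).
    move=> q; apply: (iff_trans (PL0 n m (i + 3) q i1)).
    by split => -[ws H E]; exists ws => //; move: H; [move/(W5 p m ws hn) | move=> H; apply/(W5 p m ws hn)].
  apply: HC_or; [ | apply: HC_or; [ | apply: HC_or | ] | ].
  - have HC := HCE i [:: i + 3] ltac:(rewrite /= andbT; lia) ltac:(rewrite /=; lia).
    by rewrite count1 in HC.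
  - rewrite -(count2 (i + 3) c0 c1).
    by apply: HCE; rewrite /=; [apply/and3P; split => //; lia | lia].
  - rewrite -(count2 (i + 3) c0 c2).
    by apply: HCE; rewrite /=; [apply/and3P; split => //; lia | lia].
  - by apply: HCE; rewrite /=; [apply/and4P; split => //; lia | lia].
  - move=> w /Valid_unpack [_ _ a1 _] /Valid_unpack [_ _ _ b2].
    by have := a1 _ (b2 _ (mem_head _ _)); rewrite !inE; lia.
  - move=> w /Valid_unpack [_ _ a1 _] [|] /Valid_unpack [_ _ _ b2].
      by have := a1 _ (b2 _ (mem_head _ _)); rewrite !inE; lia.
    have : i + 2 \in [:: i + 1; i + 2; i + 3] by rewrite !inE eqxx !orbT.
    by move=> /b2 /a1; rewrite !inE; lia.
  - move=> w /Valid_unpack [_ _ a1 _] [|[|]] /Valid_unpack [_ _ _ b2];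
      by have := a1 _ (b2 _ (mem_head _ _)); rewrite !inE; lia.
move=> u hu.
apply/modZp; have := MOD3 i i1 hn u hu; move/modZp => <-.
have e : forall k : nat, ((k%:Z)%:~R : 'Z_p.+2)%R = (k%:R)%R by [].
have hC : (('C(p.+2, 2))%:R + ('C(p.+2, 2))%:R : 'Z_p.+2)%R = 0%R.
  by rewrite -GRing.natrD addnn -muln2 C2m GRing.natrM pchar_Zp // GRing.mul0r.
move: hC; move: ('C(p.+2, 2)) (size (En (r := p.+2) m 0%R i [:: i + 1; i + 2; i + 3])) => C c3 hC.
rewrite !e !GRing.natrD (pchar_Zp r_gt1) GRing.add0r GRing.addrA hC.
by rewrite GRing.add0r.
Qed.
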